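(* Work in the semifield $\mathbb{R}_{\max,+}$. Let $\bm{r}_1,\ldots,\bm{r}_m\in\mathbb{R}^{n}$ and $w_1,\ldots,w_m\in\mathbb{R}$, let $\bm{p}=w_1\bm{r}_1\oplus\cdots\oplus w_m\bm{r}_m$ and $\bm{q}^{-}=w_1\bm{r}_1^{-}\oplus\cdots\oplus w_m\bm{r}_m^{-}$, and let $\varphi(\bm{x})=\bm{x}^{-}\bm{p}\oplus\bm{q}^{-}\bm{x}$. Let $A=(a_{ij})\in\mathbb{R}_{\max,+}^{n\times n}$ be an irreducible matrix with $\mathrm{Tr}(A)\le\mathbb{1}$, let $S_1=\{\bm{x}\in\mathbb{R}^n\mid A\bm{x}\le\bm{x}\}$ (i.e. $\max_{j}(a_{ij}+x_j)\le x_i$ for all $i$), and put $$\Delta=\sqrt{(A^{\ast}(\bm{q}^{-}A^{\ast})^{-})^{-}\bm{p}}.$$ Then $\min_{\bm{x}\in S_1}\varphi(\bm{x})=\Delta$, and the minimum is attained at $\bm{x}=\Delta A^{\ast}(\bm{q}^{-}A^{\ast})^{-}$.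
   Context: $\mathbb{R}_{\max,+}=(\mathbb{R}\cup\{-\infty\},-\infty,0,\max,+)$: $x\oplus y=\max(x,y)$, $x\otimes y=x+y$ (sign omitted), zero $\mathbb{0}=-\infty$, identity $\mathbb{1}=0$, $x^{-1}=-x$, $\sqrt{x}=x/2$; order is the usual order on $\mathbb{R}\cup\{-\infty\}$. Matrix and vector operations are the usual ones with $\max$ in place of sum and $+$ in place of product; vector inequalities are componentwise. For a nonzero column (or row) vector $\bm{x}=(x_j)$, the pseudo-inverse $\bm{x}^{-}$ is the row (resp. column) vector with entries $-x_j$ if $x_j\ne-\infty$ and $-\infty$ otherwise; $\bm{q}$ is the column vector with $\bm{q}^{-}$ as its pseudo-inverse. $I$ is the identity matrix (0 on the diagonal, $-\infty$ elsewhere), $A^0=I$, $A^{k}=A^{k-1}A$, and $A^{\ast}=I\oplus A\oplus\cdots\oplus A^{n-1}$. A square matrix is irreducible if it cannot be brought to block-triangular form by simultaneous permutation of rows and columns. $\mathrm{tr}A=\bigoplus_i a_{ii}$ and $\mathrm{Tr}(A)=\bigoplus_{k=1}^{n}\mathrm{tr}A^{k}$. *)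

(* Defs.v *)
From HB Require Import structures.
From mathcomp Require Import all_boot all_order all_algebra.
From mathcomp Require Import fingroup perm.
From mathcomp Require Import reals constructive_ereal.
Set Implicit Arguments. Unset Strict Implicit. Unset Printing Implicit Defensive.
Import Order.TTheory GRing.Theory Num.Theory.
Local Open Scope ring_scope.
Local Open Scope ereal_scope.

Section MaxPlus.
Variable R : realType.

(* x (+) y = max x y, zero = -oo; x (x) y = x + y *)
Definition mp_add {a b : nat} (A B : 'M[\bar R]_(a, b)) : 'M[\bar R]_(a, b) :=
  \matrix_(i, j) Order.max (A i j) (B i j).

Definition mp_zero {a b : nat} : 'M[\bar R]_(a, b) := const_mx -oo.

Definition mp_mul {a b c : nat} (A : 'M[\bar R]_(a, b)) (B : 'M[\bar R]_(b, c))
  : 'M[\bar R]_(a, c) :=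
  \matrix_(i, j) \big[Order.max/-oo]_(k < b) (A i k + B k j).

Definition mp_id {n : nat} : 'M[\bar R]_n :=
  \matrix_(i, j) (if i == j then 0 else -oo).

Fixpoint mp_pow {n : nat} (A : 'M[\bar R]_n) (k : nat) : 'M[\bar R]_n :=
  match k with
  | 0%N => mp_id
  | k'.+1 => mp_mul (mp_pow A k') A
  end.

Definition mp_star {n : nat} (A : 'M[\bar R]_n) : 'M[\bar R]_n :=
  \big[mp_add/mp_zero]_(k < n) mp_pow A k.

Definition mp_scale {a b : nat} (c : \bar R) (A : 'M[\bar R]_(a, b)) : 'M[\bar R]_(a, b) :=
  map_mx (fun e => c + e) A.

Definition mp_pinv {a b : nat} (A : 'M[\bar R]_(a, b)) : 'M[\bar R]_(b, a) :=
  \matrix_(i, j) (if A j i == -oo then -oo else - A j i).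

Definition mp_sqrt (x : \bar R) : \bar R := x * (2^-1)%:E.

Definition mp_tr {n : nat} (A : 'M[\bar R]_n) : \bar R :=
  \big[Order.max/-oo]_(i < n) A i i.

Definition mp_Tr {n : nat} (A : 'M[\bar R]_n) : \bar R :=
  \big[Order.max/-oo]_(1 <= k < n.+1) mp_tr (mp_pow A k).

(* A is reducible iff a simultaneous permutation of rows and columns brings it
   to block-triangular form [[B, O], [C, D]] with square nonempty B, D
   (O the block of -oo entries). *)
Definition mp_reducible {n : nat} (A : 'M[\bar R]_n) : Prop :=
  exists (s : 'S_n) (k : nat), (0 < k)%N /\ (k < n)%N /\
    forall i j : 'I_n, (i < k)%N -> (k <= j)%N -> A (s i) (s j) = -oo.

Definition mp_irreducible {n : nat} (A : 'M[\bar R]_n) : Prop := ~ mp_reducible A.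

Definition mp_lift {a b : nat} (x : 'M[R]_(a, b)) : 'M[\bar R]_(a, b) :=
  map_mx (fun r => r%:E) x.

End MaxPlus.

Arguments mp_add {R a b} A B.
Arguments mp_zero {R a b}.
Arguments mp_mul {R a b c} A B.
Arguments mp_id {R n}.
Arguments mp_pow {R n} A k.
Arguments mp_star {R n} A.
Arguments mp_scale {R a b} c A.
Arguments mp_pinv {R a b} A.
Arguments mp_sqrt {R} x.
Arguments mp_tr {R n} A.
Arguments mp_Tr {R n} A.
Arguments mp_reducible {R n} A.
Arguments mp_irreducible {R n} A.
Arguments mp_lift {R a b} x.

(* Main.v *)
Require Import Defs.
From HB Require Import structures.
From mathcomp Require Import all_boot all_order all_algebra.
From mathcomp Require Import fingroup perm.
From mathcomp Require Import reals constructive_ereal.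
From mathcomp Require Import zify ring lra.
Import Order.TTheory GRing.Theory Num.Theory.
Local Open Scope ring_scope.
Local Open Scope ereal_scope.

Section H.
Context {R : realType}.

Lemma maxeD (c a b : \bar R) : c + Order.max a b = Order.max (c + a) (c + b).
Proof.
case: (leP a b) => h.
  by rewrite !max_r // leeD2l.
by rewrite !max_l // leeD2l // ltW.
Qed.

Lemma bigmax_addl (I : Type) (s : seq I) (P : pred I) (F : I -> \bar R) c :
  \big[Order.max/-oo]_(i <- s | P i) (c + F i) =
  c + \big[Order.max/-oo]_(i <- s | P i) F i.
Proof.
apply: (big_rec2 (fun y1 y2 => y1 = c + y2)); first by rewrite addeNy.
by move=> i y1 y2 _ ->; rewrite maxeD.
Qed.

Lemma my_le_bigmax_seq (I : eqType) (s : seq I) (F : I -> \bar R) j :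
  j \in s -> F j <= \big[Order.max/-oo]_(k <- s) F k.
Proof.
elim: s => //= a s IH; rewrite inE big_cons => /orP[/eqP->|/IH h].
  by rewrite le_max lexx.
by rewrite le_max h orbT.
Qed.

Lemma bigmax_ub {n : nat} (F : 'I_n -> \bar R) j :
  F j <= \big[Order.max/-oo]_(k < n) F k.
Proof. exact: le_bigmax. Qed.

Lemma bigmax_lub {n : nat} (F : 'I_n -> \bar R) c :
  (forall k, F k <= c) -> \big[Order.max/-oo]_(k < n) F k <= c.
Proof. by move=> h; apply: bigmax_le => //; exact: leNye. Qed.

Lemma bigmax_mono {n : nat} (F G : 'I_n -> \bar R) :
  (forall k, F k <= G k) ->
  \big[Order.max/-oo]_(k < n) F k <= \big[Order.max/-oo]_(k < n) G k.
Proof. by move=> h; apply: bigmax_lub => k; apply: le_trans (h k) _; exact: bigmax_ub. Qed.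

Lemma bigmax_att {n : nat} (F : 'I_n -> \bar R) : (0 < n)%N ->
  exists k, \big[Order.max/-oo]_(k < n) F k = F k.
Proof.
move=> n0; have [k _ ->] := @eq_bigmax _ _ _ (-oo) (Ordinal n0) xpredT F isT
  (fun i _ => leNye _).
by exists k.
Qed.

End H.

Section P.
Variable R : realType.
Variable n : nat.
Variable A : 'M[\bar R]_n.

Fixpoint pw (f : nat -> 'I_n) (a k : nat) : \bar R :=
  if k is k'.+1 then pw f a k' + A (f (a + k')%N) (f (a + k').+1) else 0.

Lemma pw_cat f a k1 k2 : pw f a (k1 + k2) = pw f a k1 + pw f (a + k1) k2.
Proof.
elim: k2 => [|k2 IH]; first by rewrite addn0 /= adde0.
by rewrite addnS /= IH -addeA !addnA.
Qed.

Lemma pw_ext f g a k : (forall t, (a <= t <= a + k)%N -> f t = g t) ->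
  pw f a k = pw g a k.
Proof.
elim: k => [//|k IH] h /=.
rewrite IH; last by move=> t /andP[h1 h2]; apply: h; rewrite h1 /=; lia.
by rewrite !h //; lia.
Qed.

Lemma pw_shift f a d k : pw f (a + d) k = pw (fun t => f (t + d)%N) a k.
Proof.
elim: k => [//|k IH] /=; rewrite IH; congr (_ + A (f _) (f _)); lia.
Qed.

Lemma pw_le_pow k f : pw f 0 k <= mp_pow A k (f 0%N) (f k).
Proof.
elim: k => [|k IH] /=; first by rewrite mxE eqxx.
rewrite mxE add0n.
have h := bigmax_ub (fun l => mp_pow A k (f 0%N) l + A l (f k.+1)) (f k).
apply: le_trans h; exact: leeD.
Qed.

Lemma pow_path k i j : mp_pow A k i j = -oo \/
  exists f, [/\ f 0%N = i, f k = j & mp_pow A k i j <= pw f 0 k].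
Proof.
elim: k i j => [|k IH] i j /=.
  rewrite mxE; case: eqP => [<-|_]; last by left.
  by right; exists (fun _ => i).
rewrite mxE.
have n0 : (0 < n)%N by case: i => x; lia.
have [l ->] := bigmax_att (fun l => mp_pow A k i l + A l j) n0.
case: (IH i l) => [->|[f [f0 fk fle]]]; first by left.
right; exists (fun t => if (t <= k)%N then f t else j); split => //.
  by rewrite ltnn.
rewrite /= add0n leqnn ltnn.
rewrite (@pw_ext _ f); first by rewrite fk; exact: leeD.
by move=> t /andP[_ ->].
Qed.


Lemma star_entry (B : 'M[\bar R]_n) i j :
  mp_star B i j = \big[Order.max/-oo]_(k < n) mp_pow B k i j.
Proof.
rewrite /mp_star; apply: (big_morph (fun M : 'M_n => M i j) (id1 := -oo) (op1 := Order.max)).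
  by move=> M N; rewrite mxE.
by rewrite mxE.
Qed.

Lemma pigeon (f : nat -> 'I_n) : exists a b, (a < b <= n)%N /\ f a = f b.
Proof.
pose g (i : 'I_n.+1) := f i.
have : ~~ injectiveb g.
  apply/negP => /injectiveP inj; have := leq_card _ inj; rewrite !card_ord; lia.
case/injectivePn => x [y nxy eq].
case: (ltngtP x y) => h.
- exists x, y; split => //; rewrite h /=; by have := ltn_ord y.
- exists y, x; split => //; rewrite h /=; by have := ltn_ord x.
- by exfalso; move/eqP: nxy; apply; apply: val_inj.
Qed.

Lemma pow_le_star k (hk : (k < n)%N) i j : mp_pow A k i j <= mp_star A i j.
Proof. rewrite star_entry; exact: (bigmax_ub (fun k : 'I_n => mp_pow A k i j) (Ordinal hk)). Qed.

Lemma pow_n_le_star : mp_Tr A <= 0 -> forall i j, mp_pow A n i j <= mp_star A i j.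
Proof.
move=> hT i j; case: (pow_path n i j) => [->|[f [f0 fn fle]]]; first exact: leNye.
have [a [b [hab fab]]] := pigeon f.
have Hsplit : pw f 0 n = pw f 0 a + (pw f a (b - a) + pw f b (n - b)).
  have e : (a + ((b - a) + (n - b)))%N = n by lia.
  transitivity (pw f 0 (a + ((b - a) + (n - b)))); first by rewrite e.
  rewrite pw_cat pw_cat add0n (_ : (a + (b - a))%N = b) //; lia.
have Hc : pw f a (b - a) <= 0.
  rewrite -(add0n a) pw_shift; apply: le_trans (pw_le_pow _ _) _.
  rewrite /= add0n (_ : (b - a + a)%N = b); last lia.
  rewrite -fab.
  apply: (@le_trans _ _ (mp_tr (mp_pow A (b - a)))).
    exact: (bigmax_ub (fun i => mp_pow A (b - a) i i)).
  apply: le_trans hT; rewrite /mp_Tr.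
  have hm : ((b - a)%N \in index_iota 1 n.+1) by rewrite mem_index_iota; lia.
  exact: (@my_le_bigmax_seq R nat _ (fun k => mp_tr (mp_pow A k)) _ hm).
pose g t := if (t <= a)%N then f t else f (t + (b - a))%N.
have Hg : pw g 0 (a + (n - b)) = pw f 0 a + pw f b (n - b).
  rewrite pw_cat add0n (@pw_ext g f 0 a); last by move=> t /andP[_ h]; rewrite /g h.
  congr (_ + _).
  rewrite (@pw_ext g (fun t => f (t + (b - a))%N) a); last first.
    move=> t /andP[h1 _]; rewrite /g; case: ifP => // h2.
    have -> : t = a by lia.
    rewrite fab; congr f; lia.
  by rewrite -pw_shift (_ : (a + (b - a))%N = b) //; lia.
apply: le_trans fle _; rewrite Hsplit.
apply: (@le_trans _ _ (pw f 0 a + (0 + pw f b (n - b)))).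
  by apply: leeD2l; apply: leeD.
rewrite add0e -Hg.
apply: le_trans (pw_le_pow _ _) _.
have -> : g 0%N = i by rewrite /g leq0n f0.
have -> : g (a + (n - b))%N = j.
  rewrite /g; case: ifP => h.
    have e : (a + (n - b))%N = a by lia.
    rewrite e fab -fn; congr f; lia.
  rewrite -fn; congr f; lia.
have hk : (a + (n - b) < n)%N by lia.
exact: pow_le_star.
Qed.

Lemma pow_succ_l l i j k : A i j + mp_pow A l j k <= mp_pow A l.+1 i k.
Proof.
case: (pow_path l j k) => [->|[f [f0 fl fle]]]; first by rewrite addeNy leNye.
pose g t := if t is t'.+1 then f t' else i.
have e : pw g 0 l.+1 = A i j + pw f 0 l.
  rewrite -add1n pw_cat /= add0e add0n f0; congr (_ + _).
  rewrite (pw_shift g 0 1 l); apply: pw_ext => t _; by rewrite /g addn1.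
apply: le_trans (leeD2l _ fle) _; rewrite -e.
apply: le_trans (pw_le_pow _ _) _.
by rewrite /= fl.
Qed.

Lemma adde_noinf (a b : \bar R) : a != +oo -> b != +oo -> a + b != +oo.
Proof. by move: a b => [a| |] [b| |]. Qed.

Lemma pow_noinf : (forall i j, A i j != +oo) -> forall k i j, mp_pow A k i j != +oo.
Proof.
move=> hA; elim => [|k IH] i j /=; rewrite mxE.
  by case: (i == j).
have n0 : (0 < n)%N by case: i => x; lia.
have [l ->] := bigmax_att (fun l => mp_pow A k i l + A l j) n0.
exact: adde_noinf.
Qed.

Lemma star_noinf : (forall i j, A i j != +oo) -> forall i j, mp_star A i j != +oo.
Proof.
move=> hA i j; rewrite star_entry.
have n0 : (0 < n)%N by case: i => x; lia.
have [l ->] := bigmax_att (fun l : 'I_n => mp_pow A l i j) n0.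
exact: pow_noinf.
Qed.

Lemma star_diag i : 0 <= mp_star A i i.
Proof.
have n0 : (0 < n)%N by case: i => x; lia.
apply: le_trans (pow_le_star 0 n0 i i); by rewrite /= mxE eqxx.
Qed.

Lemma pow_x (x : 'cV[\bar R]_n) : (forall l, mp_mul A x l 0%R <= x l 0%R) ->
  forall k j i, mp_pow A k j i + x i 0%R <= x j 0%R.
Proof.
move=> hx; elim => [|k IH] j i /=; rewrite mxE.
  by case: eqP => [->|_]; [rewrite add0e | rewrite addNye leNye].
rewrite addeC -bigmax_addl; apply: bigmax_lub => l.
rewrite addeCA (addeC (x i 0%R)).
apply: le_trans (IH j l); apply: leeD2l.
apply: le_trans (hx l); rewrite mxE.
exact: (bigmax_ub (fun i => A l i + x i 0%R)).
Qed.

Lemma star_x (x : 'cV[\bar R]_n) : (forall l, mp_mul A x l 0%R <= x l 0%R) ->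
  forall j i, mp_star A j i + x i 0%R <= x j 0%R.
Proof.
move=> hx j i; rewrite star_entry addeC -bigmax_addl; apply: bigmax_lub => k.
rewrite addeC; exact: pow_x.
Qed.

End P.

Lemma bigadd_entry (R : realType) (a b m : nat) (F : 'I_m -> 'M[\bar R]_(a, b)) i j :
  (\big[mp_add/mp_zero]_(k < m) F k) i j = \big[Order.max/-oo]_(k < m) F k i j.
Proof.
apply: (big_morph (fun M : 'M_(a, b) => M i j) (id1 := -oo) (op1 := Order.max)).
  by move=> M N; rewrite mxE.
by rewrite mxE.
Qed.

Lemma fin_lb {R : realType} {a b : \bar R} : a \is a fin_num -> a <= b -> b != +oo ->
  b \is a fin_num.
Proof. by move: a b => [a| |] [b| |]. Qed.

Theorem theorem7 (R : realType) (n m : nat)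
  (r : 'I_m -> 'cV[R]_n) (w : 'I_m -> R) (A : 'M[\bar R]_n) :
  (0 < n)%N -> (0 < m)%N ->
  (forall i j, A i j != +oo) ->
  mp_irreducible A ->
  mp_Tr A <= 0 ->
  let p : 'cV[\bar R]_n :=
    \big[mp_add/mp_zero]_(k < m) mp_scale (w k)%:E (mp_lift (r k)) in
  let qm : 'rV[\bar R]_n :=
    \big[mp_add/mp_zero]_(k < m) mp_scale (w k)%:E (mp_pinv (mp_lift (r k))) in
  let phi (x : 'cV[\bar R]_n) : \bar R :=
    Order.max ((mp_mul (mp_pinv x) p) 0%R 0%R) ((mp_mul qm x) 0%R 0%R) in
  let S1 (x : 'cV[\bar R]_n) : Prop :=
    (forall i, x i 0%R \is a fin_num) /\
    (forall i, (mp_mul A x) i 0%R <= x i 0%R) in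
  let As := mp_star A in
  let v := mp_mul As (mp_pinv (mp_mul qm As)) in
  let Delta := mp_sqrt ((mp_mul (mp_pinv v) p) 0%R 0%R) in
  (forall x, S1 x -> Delta <= phi x) /\
  (S1 (mp_scale Delta v) /\ phi (mp_scale Delta v) = Delta).
Proof.
move=> n0 m0 hA _ hT p qm phi S1 As v Delta.
have pfin : forall i, p i 0%R \is a fin_num.
  move=> i; rewrite /p bigadd_entry.
  have [k ->] := bigmax_att (fun k => mp_scale (w k)%:E (mp_lift (r k)) i 0%R) m0.
  by rewrite !mxE.
have qmfin : forall j, qm 0%R j \is a fin_num.
  move=> j; rewrite /qm bigadd_entry.
  have [k ->] := bigmax_att (fun k => mp_scale (w k)%:E (mp_pinv (mp_lift (r k))) 0%R j) m0.
  by rewrite !mxE.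
set pm := mp_mul qm As.
have pmE : forall j, pm 0%R j = \big[Order.max/-oo]_(l < n) (qm 0%R l + As l j).
  by move=> j; rewrite mxE.
have qm_pm : forall j, qm 0%R j <= pm 0%R j.
  move=> j; rewrite pmE; apply: le_trans (bigmax_ub (fun l => qm 0%R l + As l j) j).
  by rewrite -{1}(adde0 (qm 0%R j)); apply: leeD2l; exact: star_diag.
have Asinf : forall i j, As i j != +oo by move=> i j; exact: star_noinf.
have pmfin : forall j, pm 0%R j \is a fin_num.
  move=> j; apply: (fin_lb (qmfin j) (qm_pm j)); rewrite pmE.
  have [l ->] := bigmax_att (fun l => qm 0%R l + As l j) n0.
  apply: adde_noinf => //; by move: (qmfin l); rewrite fin_numE => /andP[].
have uE : forall k, (mp_pinv pm) k 0%R = - pm 0%R k.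
  move=> k; rewrite mxE ifF //; apply/eqP => h; move: (pmfin k); by rewrite h.
have vE : forall i, v i 0%R = \big[Order.max/-oo]_(k < n) (As i k - pm 0%R k).
  by move=> i; rewrite /v mxE; apply: eq_bigr => k _; rewrite uE.
have u_v : forall i, - pm 0%R i <= v i 0%R.
  move=> i; rewrite vE; apply: le_trans (bigmax_ub (fun k => As i k - pm 0%R k) i).
  by rewrite -{1}(add0e (- pm 0%R i)); apply: leeD => //; exact: star_diag.
have vfin : forall i, v i 0%R \is a fin_num.
  move=> i; apply: (fin_lb _ (u_v i)); first by rewrite fin_numN.
  rewrite vE; have [l ->] := bigmax_att (fun k => As i k - pm 0%R k) n0.
  apply: adde_noinf => //; by move: (pmfin l); rewrite -fin_numN fin_numE => /andP[].
have vinvE : forall i, (mp_pinv v) 0%R i = - v i 0%R.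
  move=> i; rewrite mxE ifF //; apply/eqP => h; move: (vfin i); by rewrite h.
set D := (mp_mul (mp_pinv v) p) 0%R 0%R.
have DE : D = \big[Order.max/-oo]_(i < n) (- v i 0%R + p i 0%R).
  by rewrite /D mxE; apply: eq_bigr => i _; rewrite vinvE.
have Dfin : D \is a fin_num.
  rewrite DE; have [l ->] := bigmax_att (fun i => - v i 0%R + p i 0%R) n0.
  by rewrite fin_numD fin_numN vfin pfin.
have [d Dd] : exists d, D = d%:E by exists (fine D); rewrite fineK.
have DeltaE : Delta = (d / 2)%:E by rewrite /Delta /mp_sqrt -/D Dd.
split.
  move=> x [xfin xA].
  have hp : forall i, p i 0%R <= phi x + x i 0%R.
    move=> i.
    have h1 : - x i 0%R + p i 0%R <= phi x.
      apply: le_trans _ (_ : mp_mul (mp_pinv x) p 0%R 0%R <= phi x); last first.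
        by rewrite /phi le_max lexx.
      rewrite mxE; apply: le_trans _ (bigmax_ub _ i); rewrite mxE ifF //.
      apply/eqP => h; move: (xfin i); by rewrite h.
    apply: le_trans (leeD2r (x i 0%R) h1).
    by rewrite addeAC (addeC (- _)) subee // add0e.
  have hq : forall i, x i 0%R + pm 0%R i <= phi x.
    move=> i; rewrite pmE -bigmax_addl; apply: bigmax_lub => j.
    rewrite addeCA addeC (addeC (x i 0%R)).
    apply: le_trans (leeD2r (qm 0%R j) (@star_x R n A x xA j i)) _.
    rewrite addeC; apply: le_trans _ (_ : mp_mul qm x 0%R 0%R <= phi x); last first.
      by rewrite /phi le_max lexx orbT.
    rewrite mxE; exact: (bigmax_ub (fun j => qm 0%R j + x j 0%R) j).
  have key : D <= phi x + phi x.
    rewrite DE; apply: bigmax_lub => i.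
    apply: le_trans (_ : pm 0%R i + (phi x + x i 0%R) <= _).
      apply: leeD => //; by rewrite leeNl.
    by rewrite addeCA addeC; apply: leeD2r; rewrite addeC.
  rewrite DeltaE; move: key; rewrite Dd.
  case: (phi x) => [c| |] //= key.
    rewrite lee_fin; rewrite -EFinD lee_fin in key; lra.
  exact: leey.
have Dfin' : Delta \is a fin_num by rewrite DeltaE.
have sE : forall i, (mp_scale Delta v) i 0%R = Delta + v i 0%R by move=> i; rewrite mxE.
have AAs : forall i j k, A i j + As j k <= As i k.
  move=> i j k; rewrite /As star_entry -bigmax_addl; apply: bigmax_lub => l.
  apply: le_trans (@pow_succ_l R n A l i j k) _.
  case: (ltnP l.+1 n) => hl; first exact: pow_le_star.
  have e : l.+1 = n by have := ltn_ord l; lia.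
  rewrite e; exact: pow_n_le_star.
have Av : forall i, mp_mul A v i 0%R <= v i 0%R.
  move=> i; rewrite mxE; apply: bigmax_lub => j.
  rewrite vE -bigmax_addl vE; apply: bigmax_mono => k.
  by rewrite addeA; apply: leeD2r.
split; first split.
- by move=> i; rewrite sE fin_numD Dfin' vfin.
- move=> i; rewrite mxE sE; apply: bigmax_lub => j.
  rewrite sE addeCA; apply: leeD2l.
  apply: le_trans _ (Av i); rewrite [X in _ <= X]mxE; exact: (bigmax_ub (fun j => A i j + v j 0%R) j).
have E1 : mp_mul (mp_pinv (mp_scale Delta v)) p 0%R 0%R = Delta.
  transitivity (\big[Order.max/-oo]_(i < n) (- Delta + (- v i 0%R + p i 0%R))).
    rewrite mxE; apply: eq_bigr => i _; rewrite mxE ifF; last first.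
      apply/eqP => h; move: (fin_numD Delta (v i 0%R)); rewrite -sE h Dfin' vfin //.
    by rewrite sE oppeD ?fin_num_adde_defr // addeA.
  rewrite bigmax_addl -DE Dd DeltaE -EFinN -EFinD; congr (_%:E); field; by [].
have E2 : mp_mul qm (mp_scale Delta v) 0%R 0%R <= Delta.
  rewrite mxE; apply: bigmax_lub => j.
  rewrite sE addeCA -{2}(adde0 Delta); apply: leeD2l.
  rewrite vE -bigmax_addl; apply: bigmax_lub => k.
  rewrite addeA -(subee (pmfin k)); apply: leeD2r.
  rewrite pmE; exact: (bigmax_ub (fun l => qm 0%R l + As l k) j).
by rewrite /phi E1 max_l.
Qed.
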